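(* Let $L$ be the adjoint module of $gl(1|1)$. For every $n\ge1$, the space of invariant tensors $\mathrm{Inv}(L^{\otimes n})=\{v\in L^{\otimes n}: g v=0\ \text{for all } g\in gl(1|1)\}$ has dimension $\binom{2n-2}{n-1}$.
   Context: $gl(1|1)$ is the Lie superalgebra with basis $H,G$ (even), $Q_+,Q_-$ (odd), nonzero supercommutators $[G,Q_\pm]=\pm Q_\pm$, $[Q_+,Q_-]=H$. It acts on $L^{\otimes n}$ (where $L=gl(1|1)$ with the adjoint action) by the super Leibniz rule with Koszul signs. *)

(* Defs.v *)
From HB Require Import structures.
From mathcomp Require Import all_boot all_order all_algebra algC.
Set Implicit Arguments. Unset Strict Implicit. Unset Printing Implicit Defensive.
Import Order.TTheory GRing.Theory Num.Theory.
Local Open Scope ring_scope.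

(* Basis of L = gl(1|1): index 0 = H, 1 = G (even), 2 = Q+, 3 = Q- (odd). *)
Definition gl11_odd (a : 'I_4) : bool := (1 < a)%N.

(* Structure constants: [e_a, e_b] = \sum_c gl11_br a b c * e_c (supercommutator). *)
Definition gl11_brZ (a b c : nat) : int :=
  match a, b, c with
  | 1, 2, 2 => 1%Z
  | 2, 1, 2 => (-1)%Z
  | 1, 3, 3 => (-1)%Z
  | 3, 1, 3 => 1%Z
  | 2, 3, 0 => 1%Z
  | 3, 2, 0 => 1%Z
  | _, _, _ => 0%Z
  end.

Definition gl11_br (a b c : 'I_4) : algC := (gl11_brZ a b c)%:~R.

(* Basis tensors of L^{(x) n}: functions 'I_n -> 'I_4. *)
Definition tidx (n : nat) := {ffun 'I_n -> 'I_4}.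

(* The space L^{(x) n}, coordinates w.r.t. the basis tensors. *)
Definition tensor (n : nat) := {ffun tidx n -> algC^o}.

Definition tupd n (t : tidx n) (k : 'I_n) (c : 'I_4) : tidx n :=
  [ffun j => if j == k then c else t j].

Definition ksign n (a : 'I_4) (t : tidx n) (k : 'I_n) : algC :=
  (-1) ^+ (gl11_odd a && odd (\sum_(j < n | (j < k)%N) gl11_odd (t j))).

(* Coefficient of basis tensor s in e_a . e_t (super Leibniz rule,
   adjoint action on each factor). *)
Definition actB n (a : 'I_4) (t s : tidx n) : algC :=
  \sum_(k < n) \sum_(c < 4)
     ksign a t k * gl11_br a (t k) c * (s == tupd t k c)%:R.

(* Action of g = \sum_a g a * e_a in gl(1|1) on v in L^{(x) n}. *)
Definition act n (g : {ffun 'I_4 -> algC}) (v : tensor n) : tensor n :=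
  [ffun s => \sum_(a < 4) g a * \sum_(t : tidx n) v t * actB a t s].

(* Main.v *)
Require Import Defs.
From HB Require Import structures.
From mathcomp Require Import all_boot all_order all_algebra algC.
From mathcomp Require Import ring.
Set Implicit Arguments. Unset Strict Implicit. Unset Printing Implicit Defensive.
Import Order.TTheory GRing.Theory Num.Theory.
Local Open Scope ring_scope.

Section Split.
Variable m : nat.

Definition snoc (t : tidx m) (c : 'I_4) : tidx m.+1 :=
  [ffun j => if unlift ord_max j is Some j' then t j' else c].
Definition init (s : tidx m.+1) : tidx m := [ffun j => s (lift ord_max j)].

Lemma snoc_lift t c j : snoc t c (lift ord_max j) = t j.
Proof. by rewrite ffunE liftK. Qed.
Lemma snoc_max t c : snoc t c ord_max = c.
Proof. by rewrite ffunE unlift_none. Qed.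
Lemma init_snoc t c : init (snoc t c) = t.
Proof. by apply/ffunP=> j; rewrite ffunE snoc_lift. Qed.
Lemma snoc_init s : snoc (init s) (s ord_max) = s.
Proof.
apply/ffunP=> j; rewrite ffunE; case: unliftP => [j' ->|->] //.
by rewrite ffunE.
Qed.
Lemma snoc_eq u c t d : (snoc u c == snoc t d) = (u == t) && (c == d).
Proof.
apply/idP/idP; last by case/andP=> /eqP-> /eqP->.
move/eqP=> E.
have := init_snoc u c; have := snoc_max u c.
by rewrite E init_snoc snoc_max => -> ->; rewrite !eqxx.
Qed.

Lemma widen_lift (k : 'I_m) : widen_ord (leqnSn m) k = lift ord_max k.
Proof. by apply: val_inj; rewrite /= /bump leqNgt ltn_ord. Qed.

Lemma sum_snoc (F : tidx m.+1 -> algC) :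
  \sum_s F s = \sum_t \sum_d F (snoc t d).
Proof.
rewrite pair_big /= (reindex (fun p : tidx m * 'I_4 => snoc p.1 p.2)) //.
exists (fun s => (init s, s ord_max)) => [[t d] _|s _] /=.
  by rewrite init_snoc snoc_max.
by rewrite snoc_init.
Qed.

Definition psum n (t : tidx n) : nat := \sum_(j < n) gl11_odd (t j).

Lemma psum_snoc t c : psum (snoc t c) = (psum t + gl11_odd c)%N.
Proof.
rewrite /psum big_ord_recr /= snoc_max; congr (_ + _)%N.
by apply: eq_bigr => j _; rewrite widen_lift snoc_lift.
Qed.

Definition sg n a (t : tidx n) : algC := (-1) ^+ (gl11_odd a && odd (psum t)).

Lemma ksign_lift a t d (k : 'I_m) : ksign a (snoc t d) (lift ord_max k) = ksign a t k.
Proof.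
rewrite /ksign big_mkcond big_ord_recr /=.
have hb : bump m k = k by rewrite /bump leqNgt ltn_ord.
rewrite hb ltnNge (ltnW (ltn_ord k)) addn0 -big_mkcond /=.
congr (_ ^+ (_ && odd _)); apply: eq_bigr => j _.
by rewrite widen_lift snoc_lift.
Qed.

Lemma ksign_max a t d : ksign a (snoc t d) ord_max = sg a t.
Proof.
rewrite /ksign /sg big_mkcond big_ord_recr /= ltnn addn0 /psum.
congr (_ ^+ (_ && odd _)); apply: eq_bigr => j _.
by rewrite widen_lift snoc_lift /= ltn_ord.
Qed.

Lemma tupd_lift t d (k : 'I_m) e : tupd (snoc t d) (lift ord_max k) e = snoc (tupd t k e) d.
Proof.
apply/ffunP=> j; rewrite !ffunE; case: unliftP => [j' ->|->].
  by rewrite ffunE (inj_eq (@lift_inj _ _)).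
by rewrite (negbTE (neq_lift _ _)).
Qed.

Lemma tupd_max t d e : tupd (snoc t d) ord_max e = snoc t e.
Proof.
apply/ffunP=> j; rewrite !ffunE; case: unliftP => [j' ->|->].
  by rewrite eq_sym (negbTE (neq_lift _ _)).
by rewrite ifT //; apply/eqP/val_inj.
Qed.

Lemma actB_snoc a t d u c :
  actB a (snoc t d) (snoc u c) =
  (c == d)%:R * actB a t u + (u == t)%:R * sg a t * gl11_br a d c.
Proof.
rewrite /actB big_ord_recr /= mulr_sumr; congr (_ + _).
  apply: eq_bigr => k _; rewrite mulr_sumr; apply: eq_bigr => e _.
  rewrite widen_lift ksign_lift snoc_lift tupd_lift snoc_eq.
  by case: (c == d); rewrite ?mul0r ?mul1r ?andbT ?andbF ?mulr0.
rewrite ksign_max snoc_max (bigD1 c) //= big1 ?addr0.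
  by rewrite tupd_max snoc_eq eqxx andbT; case: (u == t); rewrite ?mulr1 ?mulr0 ?mul1r ?mul0r.
move=> e ne; rewrite tupd_max snoc_eq (eq_sym c e) (negbTE ne) andbF mulr0 //.
Qed.

End Split.

Definition op n a (v : tensor n) : tensor n := [ffun s => \sum_t v t * actB a t s].
Definition par n (v : tensor n) : tensor n := [ffun u => (-1) ^+ (odd (psum u)) * v u].
Definition cmp m c (v : tensor m.+1) : tensor m := [ffun u => v (snoc u c)].
Definition sa n (a : 'I_4) (x : tensor n) := if gl11_odd a then par x else x.

Lemma op_is_linear n a : linear (@op n a).
Proof.
move=> k x y; apply/ffunP=> s; rewrite !ffunE scaler_sumr -big_split /=.
by apply: eq_bigr => t _; rewrite !ffunE mulrDl; congr (_ + _); exact: esym (mulrA _ _ _).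
Qed.
HB.instance Definition _ n a := GRing.isSemilinear.Build algC (tensor n) (tensor n) _ (@op n a)
    (GRing.semilinear_linear (@op_is_linear n a)).

Lemma par_is_linear n : linear (@par n).
Proof.
move=> k x y; apply/ffunP=> s; rewrite !ffunE /=.
rewrite mulrDr; congr (_ + _); exact: mulrCA.
Qed.
HB.instance Definition _ n := GRing.isSemilinear.Build algC (tensor n) (tensor n) _ (@par n)
    (GRing.semilinear_linear (@par_is_linear n)).

Lemma cmp_is_linear m c : linear (@cmp m c).
Proof. by move=> k x y; apply/ffunP=> s; rewrite !ffunE. Qed.
HB.instance Definition _ m c := GRing.isSemilinear.Build algC (tensor m.+1) (tensor m) _ (@cmp m c)
    (GRing.semilinear_linear (@cmp_is_linear m c)).

Lemma parK n (x : tensor n) : par (par x) = x.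
Proof.
apply/ffunP=> u; rewrite !ffunE mulrA -exprD.
by case: (odd _); rewrite /= ?expr0 ?mul1r // sqrrN expr1n mul1r.
Qed.

Lemma compD m a (v : tensor m.+1) c :
  cmp c (op a v) = op a (cmp c v) + \sum_d gl11_br a d c *: sa a (cmp d v).
Proof.
apply/ffunP=> u; rewrite !ffunE sum_snoc sum_ffunE.
transitivity (\sum_t v (snoc t c) * actB a t u +
              \sum_d gl11_br a d c * (sg a u * v (snoc u d))).
  under eq_bigr do under eq_bigr do rewrite actB_snoc mulrDr.
  under eq_bigr do rewrite big_split /=.
  rewrite big_split /=; congr (_ + _).
    apply: eq_bigr => t _; rewrite (bigD1 c) //= eqxx mul1r big1 ?addr0 //.
    by move=> d; rewrite eq_sym => /negbTE ->; rewrite mul0r mulr0.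
  rewrite exchange_big; apply: eq_bigr => d _ /=.
  rewrite (bigD1 u) //= eqxx big1 ?addr0; first by rewrite mul1r mulrC (mulrC (sg a u)) -mulrA.
  by move=> t; rewrite eq_sym => /negbTE ->; rewrite !mul0r mulr0.
congr (_ + _); first by apply: eq_bigr => t _; rewrite ffunE.
apply: eq_bigr => d _; rewrite !ffunE /sa /sg.
by case: (gl11_odd a); rewrite ?ffunE //= expr0 mul1r.
Qed.

Definition glue m (f : 'I_4 -> tensor m) : tensor m.+1 := [ffun s : tidx m.+1 => f (s ord_max) (init s)].

Lemma comp_glue m (f : 'I_4 -> tensor m) c : cmp c (glue f) = f c.
Proof. by apply/ffunP=> u; rewrite ffunE /glue ffunE snoc_max init_snoc. Qed.

Lemma tensor_ext m (v w : tensor m.+1) : (forall c, cmp c v = cmp c w) -> v = w.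
Proof.
move=> E; apply/ffunP=> s; rewrite -(snoc_init s).
have := congr1 (fun x : tensor m => x (init s)) (E (s ord_max)).
by rewrite /cmp !ffunE.
Qed.

Lemma comp_par m c (v : tensor m.+1) :
  cmp c (par v) = (-1) ^+ gl11_odd c *: par (cmp c v).
Proof.
apply/ffunP=> u; rewrite !ffunE psum_snoc oddD signr_addb.
by rewrite /GRing.scale /= oddb -mulrA mulrCA.
Qed.

Lemma op_nil a (v : tensor 0) : op a v = 0.
Proof. by apply/ffunP=> s; rewrite !ffunE big1 // => t _; rewrite /actB big_ord0 mulr0. Qed.

Lemma par_nil (v : tensor 0) : par v = v.
Proof. by apply/ffunP=> s; rewrite !ffunE /psum big_ord0 expr0 mul1r. Qed.

Lemma brZ_par (a b c : 'I_4) :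
  (gl11_brZ a b c == 0) || (gl11_odd c == gl11_odd a (+) gl11_odd b).
Proof.
by case: a => [[|[|[|[|a]]]] Ha] //; case: b => [[|[|[|[|b]]]] Hb] //;
   case: c => [[|[|[|[|c]]]] Hc].
Qed.

Lemma J1 (a e c : 'I_4) :
  (-1) ^+ gl11_odd c * gl11_br a e c =
  (-1) ^+ gl11_odd a * ((-1) ^+ gl11_odd e * gl11_br a e c).
Proof.
case/orP: (brZ_par a e c) => [/eqP E|/eqP ->]; first by rewrite /gl11_br E !mulr0.
by rewrite signr_addb mulrA.
Qed.

Lemma sum4Z (F : 'I_4 -> int) : \sum_d (F d)%:~R = (\sum_d F d)%:~R :> algC.
Proof. by rewrite !big_ord_recl !big_ord0 !intrD. Qed.

Lemma JZ (a b c e : 'I_4) :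
  \sum_(d < 4) (gl11_brZ a d c * gl11_brZ b e d -
          (-1) ^+ (gl11_odd a && gl11_odd b) * (gl11_brZ b d c * gl11_brZ a e d)) =
  \sum_(f < 4) gl11_brZ a b f * gl11_brZ f e c.
Proof.
rewrite !big_ord_recl !big_ord0.
by case: a => [[|[|[|[|a]]]] Ha] //; case: b => [[|[|[|[|b]]]] Hb] //;
   case: c => [[|[|[|[|c]]]] Hc] //; case: e => [[|[|[|[|e]]]] He].
Qed.

Lemma sa_is_linear n a : linear (@sa n a).
Proof. by move=> k x y; rewrite /sa; case: (gl11_odd a); rewrite ?linearP. Qed.
HB.instance Definition _ n a := GRing.isSemilinear.Build algC (tensor n) (tensor n) _ (@sa n a)
    (GRing.semilinear_linear (@sa_is_linear n a)).

Lemma sa_par n a (x : tensor n) : sa a (par x) = par (sa a x).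
Proof. by rewrite /sa; case: (gl11_odd a). Qed.

Lemma par_op n a (v : tensor n) : par (op a v) = (-1) ^+ gl11_odd a *: op a (par v).
Proof.
elim: n v => [|m IH] v; first by rewrite !op_nil linear0 scaler0.
apply: tensor_ext => c.
rewrite comp_par compD linearZ /= compD comp_par.
rewrite linearD linear_sum /= IH.
under [in RHS]eq_bigr do rewrite comp_par.
rewrite linearZ /= !scalerDr scalerA mulrC -scalerA; congr (_ + _).
rewrite !scaler_sumr; apply: eq_bigr => d _.
rewrite !linearZ /= sa_par !scalerA; congr (_ *: _).
by rewrite [LHS]mulrC J1; ring.
Qed.

Lemma sa_op n a b (x : tensor n) :
  sa a (op b x) = (-1) ^+ (gl11_odd a && gl11_odd b) *: op b (sa a x).
Proof. by rewrite /sa; case: (gl11_odd a); rewrite ?par_op //= expr0 scale1r. Qed.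

Lemma sa_sa n a b (x : tensor n) : sa a (sa b x) = sa b (sa a x).
Proof. by rewrite /sa; case: (gl11_odd a); case: (gl11_odd b). Qed.

Lemma modlem m (A1 A2 T1 T4 S1 S2 : tensor m) (b : bool) :
  let e := (-1) ^+ b : algC in
  (A1 + T1 + e *: T4 + S1) - e *: (A2 + T4 + e *: T1 + S2) =
  (A1 - e *: A2) + (S1 - e *: S2).
Proof.
rewrite /=; apply/ffunP => u; rewrite !ffunE.
case: b; rewrite /GRing.scale /= ?expr1 ?expr0; ring.
Qed.

Lemma cmp_opop m a b c (v : tensor m.+1) :
  cmp c (op a (op b v)) =
  op a (op b (cmp c v)) + \sum_e gl11_br b e c *: op a (sa b (cmp e v)) +
  (-1) ^+ (gl11_odd a && gl11_odd b) *: \sum_d gl11_br a d c *: op b (sa a (cmp d v)) +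
  \sum_e (\sum_d gl11_br a d c * gl11_br b e d) *: sa a (sa b (cmp e v)).
Proof.
rewrite compD compD linearD linear_sum /= -!addrA; congr (_ + _).
under eq_bigr do rewrite linearZ /=.
congr (_ + _).
under eq_bigr do rewrite compD linearD linear_sum /= scalerDr.
rewrite big_split /=; congr (_ + _).
  rewrite scaler_sumr; apply: eq_bigr => d _.
  by rewrite sa_op !scalerA mulrC.
under eq_bigr do rewrite scaler_sumr.
rewrite exchange_big /=; apply: eq_bigr => e _.
rewrite scaler_suml; apply: eq_bigr => d _.
by rewrite linearZ /= scalerA.
Qed.

Lemma J2 (a b c e : 'I_4) :
  \sum_d gl11_br a d c * gl11_br b e d -
  (-1) ^+ (gl11_odd a && gl11_odd b) * \sum_d gl11_br b d c * gl11_br a e d =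
  \sum_f gl11_br a b f * gl11_br f e c.
Proof.
rewrite mulr_sumr -sumrB.
have -> : \sum_f gl11_br a b f * gl11_br f e c =
          \sum_(f < 4) (gl11_brZ a b f * gl11_brZ f e c)%:~R.
  by apply: eq_bigr => f _; rewrite intrM.
rewrite sum4Z -JZ -sum4Z; apply: eq_bigr => d _.
by rewrite intrB !intrM intr_sign.
Qed.

Lemma K n (a b f : 'I_4) (x : tensor n) :
  gl11_br a b f *: sa f x = gl11_br a b f *: sa a (sa b x).
Proof.
case/orP: (brZ_par a b f) => [/eqP E|/eqP E]; first by rewrite /gl11_br E !scale0r.
by rewrite /sa E; case: (gl11_odd a); case: (gl11_odd b); rewrite //= parK.
Qed.

Lemma op_rep n a b (v : tensor n) :
  op a (op b v) - (-1) ^+ (gl11_odd a && gl11_odd b) *: op b (op a v) =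
  \sum_f gl11_br a b f *: op f v.
Proof.
elim: n v => [|m IH] v.
  by rewrite !op_nil scaler0 subr0 big1 // => f _; rewrite op_nil scaler0.
apply: tensor_ext => c.
rewrite linearB linearZ linear_sum /= !cmp_opop.
under [RHS]eq_bigr do rewrite linearZ /= compD scalerDr.
rewrite big_split /= (andbC (gl11_odd b)) modlem; congr (_ + _); first exact: IH.
rewrite scaler_sumr -sumrB.
under [RHS]eq_bigr do rewrite scaler_sumr.
rewrite exchange_big /=; apply: eq_bigr => e _.
rewrite sa_sa scalerA -scalerBl J2 scaler_suml.
by apply: eq_bigr => f _; rewrite [RHS]scalerA [in RHS]mulrC -[RHS]scalerA K scalerA mulrC sa_sa.
Qed.

Definition o0 : 'I_4 := @Ordinal 4 0 isT.
Definition o1 : 'I_4 := @Ordinal 4 1 isT.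
Definition o2 : 'I_4 := @Ordinal 4 2 isT.
Definition o3 : 'I_4 := @Ordinal 4 3 isT.

Lemma sum4 (V : nmodType) (F : 'I_4 -> V) : \sum_d F d = F o0 + F o1 + F o2 + F o3.
Proof.
rewrite !big_ord_recl big_ord0 addr0 !addrA.
by repeat f_equal; apply: val_inj.
Qed.

Lemma cX0 m (w : tensor m.+1) : cmp o0 (op o2 w) = op o2 (cmp o0 w) + par (cmp o3 w).
Proof. rewrite compD sum4 /sa /gl11_br /= ?(mulr0z, mulr1z, mulrN1z, scale0r, scale1r, scaleN1r, addr0, add0r) //. Qed.

Lemma cX1 m (w : tensor m.+1) : cmp o1 (op o2 w) = op o2 (cmp o1 w).
Proof. rewrite compD sum4 /sa /gl11_br /= ?(mulr0z, mulr1z, mulrN1z, scale0r, scale1r, scaleN1r, addr0, add0r) //. Qed.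

Lemma cX2 m (w : tensor m.+1) : cmp o2 (op o2 w) = op o2 (cmp o2 w) - par (cmp o1 w).
Proof. rewrite compD sum4 /sa /gl11_br /= ?(mulr0z, mulr1z, mulrN1z, scale0r, scale1r, scaleN1r, addr0, add0r) //. Qed.

Lemma cX3 m (w : tensor m.+1) : cmp o3 (op o2 w) = op o2 (cmp o3 w).
Proof. rewrite compD sum4 /sa /gl11_br /= ?(mulr0z, mulr1z, mulrN1z, scale0r, scale1r, scaleN1r, addr0, add0r) //. Qed.

Lemma cY0 m (w : tensor m.+1) : cmp o0 (op o3 w) = op o3 (cmp o0 w) + par (cmp o2 w).
Proof. rewrite compD sum4 /sa /gl11_br /= ?(mulr0z, mulr1z, mulrN1z, scale0r, scale1r, scaleN1r, addr0, add0r) //. Qed.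

Lemma cY1 m (w : tensor m.+1) : cmp o1 (op o3 w) = op o3 (cmp o1 w).
Proof. rewrite compD sum4 /sa /gl11_br /= ?(mulr0z, mulr1z, mulrN1z, scale0r, scale1r, scaleN1r, addr0, add0r) //. Qed.

Lemma cY2 m (w : tensor m.+1) : cmp o2 (op o3 w) = op o3 (cmp o2 w).
Proof. rewrite compD sum4 /sa /gl11_br /= ?(mulr0z, mulr1z, mulrN1z, scale0r, scale1r, scaleN1r, addr0, add0r) //. Qed.

Lemma cY3 m (w : tensor m.+1) : cmp o3 (op o3 w) = op o3 (cmp o3 w) + par (cmp o1 w).
Proof. rewrite compD sum4 /sa /gl11_br /= ?(mulr0z, mulr1z, mulrN1z, scale0r, scale1r, scaleN1r, addr0, add0r) //. Qed.

Lemma cN0 m (w : tensor m.+1) : cmp o0 (op o1 w) = op o1 (cmp o0 w).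
Proof. rewrite compD sum4 /sa /gl11_br /= ?(mulr0z, mulr1z, mulrN1z, scale0r, scale1r, scaleN1r, addr0, add0r) //. Qed.

Lemma cN1 m (w : tensor m.+1) : cmp o1 (op o1 w) = op o1 (cmp o1 w).
Proof. rewrite compD sum4 /sa /gl11_br /= ?(mulr0z, mulr1z, mulrN1z, scale0r, scale1r, scaleN1r, addr0, add0r) //. Qed.

Lemma cN2 m (w : tensor m.+1) : cmp o2 (op o1 w) = op o1 (cmp o2 w) + cmp o2 w.
Proof. rewrite compD sum4 /sa /gl11_br /= ?(mulr0z, mulr1z, mulrN1z, scale0r, scale1r, scaleN1r, addr0, add0r) //. Qed.

Lemma cN3 m (w : tensor m.+1) : cmp o3 (op o1 w) = op o1 (cmp o3 w) - cmp o3 w.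
Proof. rewrite compD sum4 /sa /gl11_br /= ?(mulr0z, mulr1z, mulrN1z, scale0r, scale1r, scaleN1r, addr0, add0r) //. Qed.

Lemma cH0 m (w : tensor m.+1) : cmp o0 (op o0 w) = op o0 (cmp o0 w).
Proof. rewrite compD sum4 /sa /gl11_br /= ?(mulr0z, mulr1z, mulrN1z, scale0r, scale1r, scaleN1r, addr0, add0r) //. Qed.


Lemma op0 n (v : tensor n) : op o0 v = 0.
Proof.
apply/ffunP=> s; rewrite !ffunE big1 // => t _.
rewrite /actB big1 ?mulr0 // => k _; rewrite big1 // => c _.
by rewrite /gl11_br /= mulr0 mul0r.
Qed.

Lemma twice0 n (x : tensor n) : x - (-1) ^+ true *: x = 0 -> x = 0.
Proof.
move=> /ffunP E; apply/ffunP=> u; move: (E u); rewrite !ffunE /= expr1.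
rewrite /GRing.scale /= mulN1r opprK -mulr2n => /eqP.
by rewrite mulrn_eq0 /= => /eqP.
Qed.

Lemma XX n (v : tensor n) : op o2 (op o2 v) = 0.
Proof.
apply: twice0; rewrite (op_rep o2 o2) sum4 /gl11_br /=.
by rewrite ?(mulr0z, mulr1z, mulrN1z, scale0r, scale1r, scaleN1r, addr0, add0r).
Qed.

Lemma YY n (v : tensor n) : op o3 (op o3 v) = 0.
Proof.
apply: twice0; rewrite (op_rep o3 o3) sum4 /gl11_br /=.
by rewrite ?(mulr0z, mulr1z, mulrN1z, scale0r, scale1r, scaleN1r, addr0, add0r).
Qed.

Lemma XY n (v : tensor n) : op o2 (op o3 v) = - op o3 (op o2 v).
Proof.
have := op_rep o2 o3 v; rewrite sum4 /gl11_br /= op0 ?(mulr0z, mulr1z, mulrN1z, scale0r, scale1r, scaleN1r, addr0, add0r, scaler0).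
by rewrite opprK => /eqP; rewrite addr_eq0 => /eqP.
Qed.

Lemma NX n (v : tensor n) : op o1 (op o2 v) = op o2 (op o1 v) + op o2 v.
Proof.
have := op_rep o1 o2 v; rewrite sum4 /gl11_br /= ?(mulr0z, mulr1z, mulrN1z, scale0r, scale1r, scaleN1r, addr0, add0r, scaler0).
by move=> /eqP; rewrite subr_eq => /eqP ->; rewrite addrC.
Qed.

Lemma NY n (v : tensor n) : op o1 (op o3 v) = op o3 (op o1 v) - op o3 v.
Proof.
have := op_rep o1 o3 v; rewrite sum4 /gl11_br /= ?(mulr0z, mulr1z, mulrN1z, scale0r, scale1r, scaleN1r, addr0, add0r, scaler0).
by move=> /eqP; rewrite subr_eq => /eqP ->; rewrite addrC.
Qed.

Lemma PX n (v : tensor n) : op o2 (par v) = - par (op o2 v).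
Proof. by rewrite par_op /= expr1 scaleN1r opprK. Qed.
Lemma PY n (v : tensor n) : op o3 (par v) = - par (op o3 v).
Proof. by rewrite par_op /= expr1 scaleN1r opprK. Qed.
Lemma PN n (v : tensor n) : op o1 (par v) = par (op o1 v).
Proof. by rewrite par_op /= expr0 scale1r. Qed.

Definition wt n (u : tidx n) : int := \sum_(j < n) gl11_brZ 1 (u j) (u j).

Lemma wt_snoc m (u : tidx m) c : wt (snoc u c) = wt u + gl11_brZ 1 c c.
Proof.
rewrite /wt big_ord_recr /= snoc_max; congr (_ + _).
by apply: eq_bigr => j _; rewrite widen_lift snoc_lift.
Qed.

Lemma ord4 (c : 'I_4) : [\/ c = o0, c = o1, c = o2 | c = o3].
Proof.
case: c => [[|[|[|[|c]]]] Hc] //.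
- by apply: Or41; apply: val_inj.
- by apply: Or42; apply: val_inj.
- by apply: Or43; apply: val_inj.
- by apply: Or44; apply: val_inj.
Qed.

Lemma opN n (v : tensor n) : op o1 v = [ffun u => (wt u)%:~R * v u].
Proof.
elim: n v => [|m IH] v.
  by rewrite op_nil; apply/ffunP=> u; rewrite !ffunE /wt big_ord0 mul0r.
apply: tensor_ext => c; case: (ord4 c) => ->;
  rewrite ?cN0 ?cN1 ?cN2 ?cN3 IH; apply/ffunP=> u; rewrite !ffunE wt_snoc intrD /=;
  rewrite ?(mulr0z, mulr1z, mulrN1z, addr0); ring.
Qed.

Lemma opN0 n (v : tensor n) : op o1 v = 0 <-> forall u, wt u != 0 -> v u = 0.
Proof.
rewrite opN; split.
  move=> /ffunP E u nz; move: (E u); rewrite !ffunE => /eqP.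
  by rewrite mulf_eq0 intr_eq0 (negbTE nz) => /eqP.
move=> H; apply/ffunP=> u; rewrite !ffunE.
by case: (eqVneq (wt u) 0) => [->|/H ->]; rewrite ?mul0r ?mulr0.
Qed.

Definition psi m (x : tensor m) : tensor m.+1 :=
  glue (fun c => if val c == 0%N then x else if val c == 1%N then op o2 (op o3 x)
                 else if val c == 2%N then - par (op o3 x) else - par (op o2 x)).

Lemma psi0 m (x : tensor m) : cmp o0 (psi x) = x. Proof. by rewrite comp_glue. Qed.
Lemma psi1 m (x : tensor m) : cmp o1 (psi x) = op o2 (op o3 x). Proof. by rewrite comp_glue. Qed.
Lemma psi2 m (x : tensor m) : cmp o2 (psi x) = - par (op o3 x). Proof. by rewrite comp_glue. Qed.
Lemma psi3 m (x : tensor m) : cmp o3 (psi x) = - par (op o2 x). Proof. by rewrite comp_glue. Qed.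

Lemma psi_is_linear m : linear (@psi m).
Proof.
move=> k x y; apply: tensor_ext => c; rewrite linearP /=.
by case: (ord4 c) => ->; rewrite ?psi0 ?psi1 ?psi2 ?psi3 // !linearD !linearZ /= ?opprD ?scalerN.
Qed.
HB.instance Definition _ m := GRing.isSemilinear.Build algC (tensor m) (tensor m.+1) _ (@psi m)
    (GRing.semilinear_linear (@psi_is_linear m)).

Lemma psi_inv m (x : tensor m) : op o1 x = 0 -> forall a, op a (psi x) = 0.
Proof.
move=> Nx a; case: (ord4 a) => ->; first exact: op0.
- apply: tensor_ext => c; rewrite linear0.
  case: (ord4 c) => ->; rewrite ?cN0 ?cN1 ?cN2 ?cN3 ?psi0 ?psi1 ?psi2 ?psi3 //.
  + by rewrite NX NY Nx !linear0 sub0r linearN addNr.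
  + by rewrite linearN /= PN NY Nx linear0 sub0r linearN opprK addrN.
  + by rewrite linearN /= PN NX Nx linear0 add0r opprK addNr.
- apply: tensor_ext => c; rewrite linear0.
  case: (ord4 c) => ->; rewrite ?cX0 ?cX1 ?cX2 ?cX3 ?psi0 ?psi1 ?psi2 ?psi3 //.
  + by rewrite linearN /= (parK (op o2 x)) subrr.
  + by rewrite XX.
  + by rewrite linearN /= PX opprK addrN.
  + by rewrite linearN /= PX XX opprK linear0.
- apply: tensor_ext => c; rewrite linear0.
  case: (ord4 c) => ->; rewrite ?cY0 ?cY1 ?cY2 ?cY3 ?psi0 ?psi1 ?psi2 ?psi3 //.
  + by rewrite linearN /= (parK (op o3 x)) subrr.
  + by rewrite XY linearN /= YY oppr0.
  + by rewrite linearN /= PY YY opprK linear0.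
  + by rewrite linearN /= PY opprK XY linearN /= subrr.
Qed.

Lemma inv_psi m (v : tensor m.+1) : (forall a, op a v = 0) ->
  op o1 (cmp o0 v) = 0 /\ v = psi (cmp o0 v).
Proof.
move=> H; have hc a c : cmp c (op a v) = 0 by rewrite H linear0.
split; first by rewrite -cN0 hc.
have e3 : cmp o3 v = - par (op o2 (cmp o0 v)).
  by move: (hc o2 o0); rewrite cX0 => /eqP; rewrite addr_eq0 => /eqP ->; rewrite linearN /= (parK (cmp o3 v)) opprK.
have e2 : cmp o2 v = - par (op o3 (cmp o0 v)).
  by move: (hc o3 o0); rewrite cY0 => /eqP; rewrite addr_eq0 => /eqP ->; rewrite linearN /= (parK (cmp o2 v)) opprK.
have e1 : cmp o1 v = op o2 (op o3 (cmp o0 v)).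
  move: (hc o2 o2); rewrite cX2 => /eqP; rewrite subr_eq0 => /eqP E.
  by rewrite -[cmp o1 v]parK -E e2 linearN /= PX opprK parK.
apply: tensor_ext => c; case: (ord4 c) => ->; by rewrite ?psi0 ?psi1 ?psi2 ?psi3.
Qed.

Local Close Scope ring_scope.

Definition bit (c : 'I_4) (b : bool) : bool :=
  if b then (val c == 1%N) || (val c == 2%N) else (val c == 0%N) || (val c == 2%N).
Definition code (b1 b2 : bool) : 'I_4 :=
  if b1 then (if b2 then o2 else o0) else (if b2 then o1 else o3).

Section Count.
Variable m : nat.
Definition enc (t : tidx m) : {set 'I_m * bool} := [set p | bit (t p.1) p.2].
Definition dec (B : {set 'I_m * bool}) : tidx m :=
  [ffun j => code ((j, false) \in B) ((j, true) \in B)].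

Lemma decK : cancel enc dec.
Proof.
move=> t; apply/ffunP=> j; rewrite ffunE !inE /=.
by case: (ord4 (t j)) => ->.
Qed.

Lemma encK B : enc (dec B) = B.
Proof.
apply/setP=> -[j b]; rewrite inE ffunE /=.
by case: b; case: ((j, false) \in B); case: ((j, true) \in B).
Qed.

Lemma card_enc t : (Posz #|enc t| = (Posz m) + wt t)%R.
Proof.
rewrite cardsE -sum1_card big_mkcond /=.
rewrite -(pair_big xpredT xpredT (fun j b => if bit (t j) b then 1%N else 0%N)) /=.
rewrite (big_morph Posz PoszD (erefl _)) /wt.
have -> : (Posz m) = (\sum_(j < m) (1 : int))%R by rewrite sumr_const card_ord natz.
rewrite -big_split /=; apply: eq_bigr => j _.
by rewrite big_bool /=; case: (ord4 (t j)) => ->.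
Qed.

Lemma card_wt0 : #|[pred t : tidx m | wt t == 0%R]| = 'C(m * 2, m).
Proof.
have <- : #|{: ('I_m * bool)%type}| = (m * 2)%N by rewrite card_prod card_ord card_bool.
rewrite -card_draws -cardsE -(card_imset _ (can_inj decK)).
congr #|pred_of_set _|; apply/setP=> B; rewrite !inE.
apply/imsetP/idP => [[t]|hB].
  rewrite inE => /eqP w0 ->; apply/eqP/eqP; rewrite -eqz_nat.
  by rewrite -[X in X == _]/(Posz #|enc t|) card_enc w0 addr0.
exists (dec B); rewrite ?encK // inE.
have := card_enc (dec B); rewrite encK (eqP hB) => E.
by apply/eqP; apply: (@addrI _ (Posz m)); rewrite addr0 -E.
Qed.
End Count.

Local Open Scope ring_scope.

Lemma act_op n (g : {ffun 'I_4 -> algC}) (v : tensor n) :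
  act g v = \sum_a g a *: op a v.
Proof. by apply/ffunP=> s; rewrite !ffunE sum_ffunE; apply: eq_bigr => a _; rewrite !ffunE. Qed.

Lemma act_iff n (v : tensor n) :
  (forall g, act g v = 0) <-> (forall a, op a v = 0).
Proof.
split=> [H a|H g]; last by rewrite act_op big1 // => a _; rewrite H scaler0.
have := H [ffun b => (b == a)%:R]; rewrite act_op (bigD1 a) //= big1 ?addr0.
  by rewrite ffunE eqxx scale1r.
by move=> b nb; rewrite ffunE (negbTE nb) scale0r.
Qed.

Definition delta m (t : tidx m) : tensor m := [ffun u : tidx m => ((u == t)%:R : algC^o)].

Lemma delta_w0 m (t : tidx m) : wt t = 0 -> op o1 (delta t) = 0.
Proof.
move=> w0; apply/opN0 => u nz; rewrite ffunE.
by case: eqP => [E|//]; move: nz; rewrite E w0.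
Qed.

Lemma psi_at0 m (x : tensor m) u : psi x (snoc u o0) = x u.
Proof. by rewrite /psi /glue ffunE snoc_max init_snoc. Qed.

Theorem proposition2p5 (n : nat) : (1 <= n)%N ->
  exists U : {vspace tensor n},
    (forall v : tensor n,
        v \in U <-> (forall g : {ffun 'I_4 -> algC}, act g v = 0)) /\
    \dim U = 'C(2 * n - 2, n - 1).
Proof.
case: n => [//|m] _.
pose T0 := enum [pred t : tidx m | wt t == 0].
pose S := [seq psi (delta t) | t <- T0].
have Sinv x : x \in S -> forall a, op a x = 0.
  case/mapP=> t; rewrite mem_enum inE => /eqP w0 ->.
  by apply: psi_inv; apply: delta_w0.
have t0 : tidx m by exact: [ffun => o0].
have Snth (i : 'I_(size S)) : (in_tuple S)`_i = psi (delta (nth t0 T0 i)).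
  by rewrite /= (nth_map t0) // -(size_map (fun t => psi (delta t))) ltn_ord.
have fr : free S.
  suff: free (in_tuple S) by []. apply/freeP => k Hk i.
  move: Hk => /ffunP /(_ (snoc (nth t0 T0 i) o0)); rewrite sum_ffunE ffunE.
  under eq_bigr do rewrite ffunE Snth psi_at0 ffunE.
  rewrite (bigD1 i) //= big1.
    by rewrite eqxx addr0 /GRing.scale /= mulr1.
  move=> j nj; rewrite nth_uniq ?enum_uniq //.
  - by rewrite (inj_eq val_inj) eq_sym (negbTE nj) /GRing.scale /= mulr0.
  - by rewrite -(size_map (fun t => psi (delta t))) ltn_ord.
  - by rewrite -(size_map (fun t => psi (delta t))) ltn_ord.
exists <<S>>%VS; split.
  move=> v; rewrite act_iff; split.
    move=> /(coord_span (X:=in_tuple S)) -> a; rewrite linear_sum big1 //= => i _.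
    by rewrite linearZ /= Sinv ?scaler0 // mem_nth.
  move/inv_psi => [N0 ->].
  have -> : cmp o0 v = \sum_(t <- T0) cmp o0 v t *: delta t.
    apply/ffunP=> u; rewrite sum_ffunE big_enum /=.
    case: (eqVneq (wt u) 0) => [w0|nz].
      rewrite (bigD1 u) ?inE ?w0 //= big1 /delta ?ffunE ?eqxx ?addr0.
        by rewrite /GRing.scale /= mulr1.
      by move=> t /andP[_ nt]; rewrite /delta !ffunE eq_sym (negbTE nt) /GRing.scale /= mulr0.
    rewrite big1 ?(proj1 (opN0 _) N0 u nz) // => t; rewrite inE => /eqP wt0.
    rewrite /delta !ffunE; case: (eqVneq u t) => [E|_]; first by move: nz; rewrite E wt0 eqxx.
    by rewrite /GRing.scale /= mulr0.
  rewrite linear_sum big_seq; apply: rpred_sum => t tT0.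
  by rewrite linearZ /=; apply: memvZ; apply: memv_span; apply/mapP; exists t.
rewrite (eqP fr) size_map /T0 -cardE card_wt0.
have -> : (2 * m.+1 - 2 = m * 2)%N by rewrite mulnC mulSn addnC addnK.
by rewrite subn1.
Qed.
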